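(* Let $\Psi$ be a saturated root subsystem of $\Phi$, let $\Gamma$ be a gallery in $\Phi$, and let $\Delta$ be a gallery in $\Phi$ lifting $\Gamma_\Psi$. Let $p:[1,|\Gamma_\Psi|]\to[1,|\Gamma|]$ be the increasing embedding with image $I_\Psi(\Gamma)$. Then $(\Delta,\Gamma)$ is a $p$-pair whose sign and cosign are both positive.
   Context: $E$ is a finite-dimensional real Euclidean space with inner product $(\cdot,\cdot)$; $\Phi\subset E$ is a finite (reduced) root system (not necessarily spanning, not necessarily crystallographic) with reflections $\omega_\alpha$ through $L_\alpha=\alpha^\perp$. A root subsystem is a nonempty $\Psi\subset\Phi$ stable under $\omega_\alpha$, $\alpha\in\Psi$; it is saturated if $\Psi=\mathbb R\Psi\cap\Phi$. For $X\subset\Phi$, $\mathrm{Ch}_X$ is the set of connected components of $E\setminus\bigcup_{\alpha\in X}L_\alpha$; for $C\in\mathrm{Ch}_\Phi$, $C_\Psi$ is the chamber of $\mathrm{Ch}_\Psi$ containing $C$. Chambers $C,D\in\mathrm{Ch}_X$ are connected through $L_\alpha$ if $\overline C\cap\overline D\cap L_\alpha$ has nonempty interior in $L_\alpha$. A gallery in $X$ is a sequence $(C_0,L_{\alpha_1},C_1,\dots,L_{\alpha_n},C_n)$ with $C_j\in\mathrm{Ch}_X$, $\alpha_j\in X$, $C_{j-1},C_j$ connected through $L_{\alpha_j}$; its length is $n$, $C_j$ is its $j$th chamber and $(L_{\alpha_1},\dots,L_{\alpha_n})$ its sequence of walls. For a gallery $\Gamma=(C_0,L_{\alpha_1},\dots,L_{\alpha_n},C_n)$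 in $\Phi$, $I_\Psi(\Gamma)=\{i:\alpha_i\in\Psi\}=\{i_1<\dots<i_m\}$ and $\Gamma_\Psi=((C_0)_\Psi,L_{\alpha_{i_1}},(C_{i_1})_\Psi,\dots,L_{\alpha_{i_m}},(C_{i_m})_\Psi)$. For $C\in\mathrm{Ch}_\Phi$, $\Phi^s(C)$ is the unique simple system of $\Phi$ contained in $\Phi^+(C)=\{\alpha\in\Phi:(e,\alpha)>0\ \forall e\in C\}$; similarly $\Psi^s(D)$ for $D\in\mathrm{Ch}_\Psi$. $C\in\mathrm{Ch}_\Phi$ lifts $D\in\mathrm{Ch}_\Psi$ if $\Psi^s(D)\subset\Phi^s(C)$; a gallery in $\Phi$ lifts a gallery in $\Psi$ if they have the same sequence of walls and each $j$th chamber of the first lifts the $j$th chamber of the second. Given galleries $\Gamma=(C_0,L_{\alpha_1},\dots,L_{\alpha_n},C_n)$ and $\Delta=(D_0,L_{\beta_1},\dots,L_{\beta_m},D_m)$ in $\Phi$ and an increasing embedding $p:[1,m]\to[1,n]$, $(\Delta,\Gamma)$ is a $p$-pair if $L_{\alpha_{p(i)}}=L_{\beta_i}$ for all $i$. Its sign $(\epsilon_i)$ has $\epsilon_i=1$ if $L_{\beta_i}$ does not separate $D_i$ and $C_{p(i)}$ (i.e. they lie in the same open half-space of $L_{\beta_i}$) and $\epsilon_i=-1$ otherwise; its cosign $(\mu_i)$ has $\mu_i=1$ if $L_{\beta_i}$ does not separate $D_{i-1}$ and $C_{p(i)-1}$ and $\mu_i=-1$ otherwise. A sign or cosign is positive if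 all entries equal $1$. *)

(* Defs.v *)
From HB Require Import structures.
From mathcomp Require Import all_boot all_order all_algebra.
From mathcomp Require Import all_classical all_reals all_analysis.
Set Implicit Arguments. Unset Strict Implicit. Unset Printing Implicit Defensive.
Import Order.TTheory GRing.Theory Num.Theory.
Import numFieldNormedType.Exports.
Local Open Scope classical_set_scope.
Local Open Scope ring_scope.

Section RootDefs.
Variables (R : realType) (n : nat).
Notation E := 'rV[R]_n.

Definition dot (u v : E) : R := (u *m v^T) 0 0.

Definition refl (a x : E) : E := x - ((2 * dot x a) / dot a a) *: a.

Definition hyper (a : E) : set E := [set x | dot x a = 0].

(* finite reduced root system (not necessarily spanning / crystallographic) *)
Definition root_system (Phi : seq E) : Prop :=
  [/\ (0 : E) \notin Phi,
      (forall a b, a \in Phi -> b \in Phi -> refl a b \in Phi) &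
      (forall a (c : R), a \in Phi -> c *: a \in Phi -> c = 1 \/ c = -1)].

Definition root_subsystem (Phi Psi : seq E) : Prop :=
  [/\ Psi != [::], {subset Psi <= Phi} &
      (forall a b, a \in Psi -> b \in Psi -> refl a b \in Psi)].

Definition in_span (S : seq E) (v : E) : Prop :=
  exists c : nat -> R, v = \sum_(i < size S) c i *: S`_i.

(* saturated : Psi = R Psi \cap Phi *)
Definition saturated (Phi Psi : seq E) : Prop :=
  forall b, b \in Phi -> in_span Psi b -> b \in Psi.

Definition regular (X : seq E) : set E :=
  [set x | forall a, a \in X -> dot x a != 0].

Definition is_chamber (X : seq E) (C : set E) : Prop :=
  exists2 x, regular X x & C = connected_component (regular X) x.

Definition chamber_restr (Psi : seq E) (C : set E) : set E :=
  [set y | exists2 x, C x & connected_component (regular Psi) x y].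

(* C, D connected through L_alpha: closure C \cap closure D \cap L_alpha has
   nonempty interior in L_alpha *)
Definition connected_through (C D : set E) (a : E) : Prop :=
  exists x, hyper a x /\ exists2 e : R, 0 < e &
    forall y, hyper a y -> ball x e y -> closure C y /\ closure D y.

Definition pos_roots (X : seq E) (C : set E) : set E :=
  [set a | a \in X /\ forall e, C e -> dot e a > 0].

Definition lin_indep (S : seq E) : Prop :=
  forall c : nat -> R, \sum_(i < size S) c i *: S`_i = 0 ->
    forall i, (i < size S)%N -> c i = 0.

Definition simple_system (X S : seq E) : Prop :=
  [/\ uniq S, {subset S <= X}, lin_indep S &
      forall a, a \in X -> exists c : nat -> R,
        a = \sum_(i < size S) c i *: S`_i /\
        ((forall i, 0 <= c i) \/ (forall i, c i <= 0))].

(* X^s(C): the (unique) simple system of X contained in X^+(C) *)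
Definition simple_roots (X : seq E) (C : set E) : set E :=
  [set a | exists S, [/\ simple_system X S, (forall b, b \in S -> pos_roots X C b)
                        & a \in S]].

(* galleries: length, chambers C_0..C_len, roots alpha_1..alpha_len whose
   hyperplanes are the walls *)
Record gallery := Gallery {
  glen : nat;
  gch : nat -> set E;
  gwall : nat -> E }.

Definition is_gallery (X : seq E) (G : gallery) : Prop :=
  (forall j, (j <= glen G)%N -> is_chamber X (gch G j)) /\
  (forall j, (1 <= j <= glen G)%N ->
     gwall G j \in X /\ connected_through (gch G j.-1) (gch G j) (gwall G j)).

Definition I_Psi (Psi : seq E) (G : gallery) : seq nat :=
  [seq i <- iota 1 (glen G) | gwall G i \in Psi].

Definition restr_idx (Psi : seq E) (G : gallery) (j : nat) : nat :=
  if j is 0 then 0%N else nth 0%N (I_Psi Psi G) j.-1.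

Definition restr_gallery (Psi : seq E) (G : gallery) : gallery :=
  Gallery (size (I_Psi Psi G))
          (fun j => chamber_restr Psi (gch G (restr_idx Psi G j)))
          (fun j => gwall G (restr_idx Psi G j)).

Definition chamber_lifts (Phi Psi : seq E) (C D : set E) : Prop :=
  simple_roots Psi D `<=` simple_roots Phi C.

Definition gallery_lifts (Phi Psi : seq E) (G H : gallery) : Prop :=
  [/\ glen G = glen H,
      (forall j, (1 <= j <= glen G)%N -> hyper (gwall G j) = hyper (gwall H j)) &
      (forall j, (j <= glen G)%N -> chamber_lifts Phi Psi (gch G j) (gch H j))].

Definition incr_embedding_onto (p : nat -> nat) (m : nat) (I : seq nat) : Prop :=
  (forall i j, (1 <= i)%N -> (i < j)%N -> (j <= m)%N -> (p i < p j)%N) /\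
  (forall k, (exists i, (1 <= i <= m)%N /\ p i = k) <-> k \in I).

Definition p_pair (p : nat -> nat) (D G : gallery) : Prop :=
  forall i, (1 <= i <= glen D)%N -> hyper (gwall G (p i)) = hyper (gwall D i).

Definition same_side (b : E) (A B : set E) : Prop :=
  (A `<=` [set x | dot x b > 0] /\ B `<=` [set x | dot x b > 0]) \/
  (A `<=` [set x | dot x b < 0] /\ B `<=` [set x | dot x b < 0]).

Definition sign_positive (p : nat -> nat) (D G : gallery) : Prop :=
  forall i, (1 <= i <= glen D)%N -> same_side (gwall D i) (gch D i) (gch G (p i)).

Definition cosign_positive (p : nat -> nat) (D G : gallery) : Prop :=
  forall i, (1 <= i <= glen D)%N ->
    same_side (gwall D i) (gch D i.-1) (gch G (p i).-1).

End RootDefs.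

(* Main.v *)
Require Import Defs.
From HB Require Import structures.
From mathcomp Require Import all_boot all_order all_algebra.
From mathcomp Require Import all_classical all_reals all_analysis.
From mathcomp Require Import zify.
Set Implicit Arguments. Unset Strict Implicit. Unset Printing Implicit Defensive.

Definition incr_on (f : nat -> nat) m :=
  forall i j, (1 <= i)%N -> (i < j)%N -> (j <= m)%N -> (f i < f j)%N.

Lemma incr_le f m i j : incr_on f m -> (1 <= i)%N -> (i <= j)%N -> (j <= m)%N ->
  (f i <= f j)%N.
Proof.
move=> hf i1 ij jm; case: (ltngtP i j) ij => // [lt|->] _; last by [].
by apply: ltnW; apply: hf.
Qed.

Lemma incr_refl f m i j : incr_on f m -> (1 <= i <= m)%N -> (1 <= j <= m)%N ->
  (f i < f j)%N -> (i < j)%N.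
Proof.
move=> hf /andP[i1 im] /andP[j1 jm] fij; rewrite ltnNge; apply/negP => ji.
by have := incr_le hf j1 ji im; rewrite leqNgt fij.
Qed.

Lemma incr_unique (p q : nat -> nat) m : incr_on p m -> incr_on q m ->
  (forall i, (1 <= i <= m)%N -> exists j, (1 <= j <= m)%N /\ p i = q j) ->
  (forall i, (1 <= i <= m)%N -> exists j, (1 <= j <= m)%N /\ q i = p j) ->
  forall i, (1 <= i <= m)%N -> p i = q i.
Proof.
move=> hp hq pq qp; elim/ltn_ind => i IH im.
have [k [km pk]] := pq i im.
case: (ltngtP k i) => [ki|ik|e]; last by rewrite pk e.
- have k1 : (1 <= k <= m)%N by lia.
  have pk' := IH k ki k1.
  have h : (p k < p i)%N by apply: hp => //; lia.
  lia.
- have [l [lm ql]] := qp i im.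
  case: (ltngtP l i) => [li|il|e].
  + have pl := IH l li lm.
    have h : (q l < q i)%N by apply: hq => //; lia.
    lia.
  + have h1 : (p i < p l)%N by apply: hp => //; lia.
    have h2 : (q i < q k)%N by apply: hq => //; lia.
    lia.
  + have h2 : (q i < q k)%N by apply: hq => //; lia.
    rewrite e in ql; lia.
Qed.

Lemma nth_incr (s : seq nat) : sorted ltn s -> incr_on (fun i => nth 0 s i.-1) (size s).
Proof.
move=> ss i j i1 ij jm /=.
have H := sorted_ltn_nth ltn_trans 0 ss.
apply: H; rewrite ?inE; lia.
Qed.

Lemma nth_mem1 (s : seq nat) i : (1 <= i <= size s)%N -> nth 0 s i.-1 \in s.
Proof. by move=> /andP[h1 h2]; apply: mem_nth; apply: (leq_trans _ h2); rewrite ltn_predL. Qed.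

Lemma mem_nth_ex (s : seq nat) k : k \in s ->
  exists i, (1 <= i <= size s)%N /\ nth 0 s i.-1 = k.
Proof.
move=> ks; exists (index k s).+1; split; last exact: nth_index.
by rewrite /= index_mem ks.
Qed.

Lemma I_sorted (R : realType) n (Psi : seq 'rV[R]_n) G : sorted ltn (I_Psi Psi G).
Proof. exact/sorted_filter/iota_ltn_sorted/ltn_trans. Qed.

Lemma I_mem (R : realType) n (Psi : seq 'rV[R]_n) G k :
  (k \in I_Psi Psi G) = [&& (1 <= k)%N, (k <= glen G)%N & gwall G k \in Psi].
Proof.
rewrite /I_Psi mem_filter mem_iota; case: (gwall G k \in Psi) => /=; last by rewrite !andbF.
rewrite andbT; congr (_ && _); lia.
Qed.

Import Order.TTheory GRing.Theory Num.Theory.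
Import numFieldNormedType.Exports.
Local Open Scope classical_set_scope.
Local Open Scope ring_scope.

Section Lin.
Variables (R : realType) (n : nat).
Notation E := 'rV[R]_n.
Implicit Types u v w x y a b : E.

Lemma dotE u v : dot u v = \sum_j u 0 j * v 0 j.
Proof. by rewrite /dot mxE; apply: eq_bigr => j _; rewrite mxE. Qed.

Lemma dotC u v : dot u v = dot v u.
Proof. by rewrite !dotE; apply: eq_bigr => j _; rewrite mulrC. Qed.

Lemma dotDl u v w : dot (u + v) w = dot u w + dot v w.
Proof. by rewrite !dotE -big_split; apply: eq_bigr => j _; rewrite mxE mulrDl. Qed.

Lemma dotZl (c : R) u w : dot (c *: u) w = c * dot u w.
Proof. by rewrite !dotE mulr_sumr; apply: eq_bigr => j _; rewrite mxE mulrA. Qed.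

Lemma dot0l w : dot 0 w = 0.
Proof. by rewrite dotE big1 // => j _; rewrite mxE mul0r. Qed.

Lemma dotNl u w : dot (- u) w = - dot u w.
Proof. by rewrite -scaleN1r dotZl mulN1r. Qed.

Lemma dotBl u v w : dot (u - v) w = dot u w - dot v w.
Proof. by rewrite dotDl dotNl. Qed.

Lemma dotDr u v w : dot w (u + v) = dot w u + dot w v.
Proof. by rewrite dotC dotDl !(dotC w). Qed.

Lemma dotZr (c : R) u w : dot w (c *: u) = c * dot w u.
Proof. by rewrite dotC dotZl dotC. Qed.

Lemma dotNr u w : dot w (- u) = - dot w u.
Proof. by rewrite dotC dotNl dotC. Qed.

Lemma dotBr u v w : dot w (u - v) = dot w u - dot w v.
Proof. by rewrite dotDr dotNr. Qed.

Lemma dot0r w : dot w 0 = 0.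
Proof. by rewrite dotC dot0l. Qed.

Lemma dot_suml (I : Type) (s : seq I) (P : pred I) (F : I -> E) w :
  dot (\sum_(i <- s | P i) F i) w = \sum_(i <- s | P i) dot (F i) w.
Proof.
by apply: (big_morph (fun u => dot u w)); [move=> u v; exact: dotDl | exact: dot0l].
Qed.

Lemma dot_sumr (I : Type) (s : seq I) (P : pred I) (F : I -> E) w :
  dot w (\sum_(i <- s | P i) F i) = \sum_(i <- s | P i) dot w (F i).
Proof.
by apply: (big_morph (fun u => dot w u)); [move=> u v; exact: dotDr | exact: dot0r].
Qed.

Lemma dot_ge0 x : 0 <= dot x x.
Proof. by rewrite dotE; apply: sumr_ge0 => j _; exact: sqr_ge0. Qed.

Lemma dot_eq0 x : dot x x = 0 -> x = 0.
Proof.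
rewrite dotE => /eqP; rewrite psumr_eq0; last by move=> j _; exact: sqr_ge0.
move=> /allP H; apply/rowP => j; rewrite mxE.
by have /(_ (mem_index_enum j)) := H j; rewrite -expr2 sqrf_eq0 => /eqP.
Qed.

Lemma dot_gt0 x : x != 0 -> 0 < dot x x.
Proof.
move=> x0; rewrite lt_neqAle dot_ge0 andbT eq_sym; apply/eqP => /dot_eq0.
by apply/eqP.
Qed.

Lemma cont_dot b : continuous (fun x : E => dot x b).
Proof.
have -> : (fun x : E => dot x b) = (fun x => \sum_j x 0 j * b 0 j).
  by apply: funext => x; rewrite dotE.
have H : forall s : seq 'I_n, continuous (fun x : E => \sum_(j <- s) x 0 j * b 0 j).
  elim => [|j s IH] y.
    under eq_fun do rewrite big_nil.
    exact: cst_continuous.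
  under eq_fun do rewrite big_cons.
  apply: (@continuousD _ _ _ (fun x : E => x 0 j * b 0 j)) => //.
  apply: (@continuousM _ _ (fun x : E => x 0 j) (fun _ => b 0 j)).
    exact: coord_continuous.
  exact: cst_continuous.
  exact: IH.
exact: H.
Qed.

End Lin.

Section Geo.
Variables (R : realType) (n : nat).
Notation E := 'rV[R]_n.
Implicit Types u v w x y a b : E.

Lemma hyper_prop a b : a != 0 -> hyper b = hyper a ->
  b = (dot b a / dot a a) *: a.
Proof.
move=> a0 hab; set t := dot b a / dot a a.
have aa0 : dot a a != 0 by rewrite gt_eqF // dot_gt0.
set x := b - t *: a.
have xa : dot x a = 0 by rewrite /x dotBl dotZl /t divfK // subrr.
have : hyper b x by rewrite hab.
rewrite /hyper /= => xb.
have : dot x x = 0 by rewrite {2}/x dotBr dotZr xb xa mulr0 subrr.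
by move/dot_eq0/eqP; rewrite subr_eq0 => /eqP.
Qed.

Lemma patch_prop g s x (e : R) : g != 0 -> dot x g = 0 -> 0 < e ->
  (forall y, dot y g = 0 -> ball x e y -> dot y s = 0) ->
  s = (dot s g / dot g g) *: g.
Proof.
move=> g0 xg e0 H; set t := dot s g / dot g g.
have gg0 : dot g g != 0 by rewrite gt_eqF // dot_gt0.
set w := s - t *: g.
have wg : dot w g = 0 by rewrite /w dotBl dotZl /t divfK // subrr.
set eps := e / (`|w| + 1).
have n1 : 0 < `|w| + 1 by rewrite ltr_wpDl.
have eps0 : 0 < eps by rewrite divr_gt0.
have xs : dot x s = 0 by apply: H => //; exact: ballxx.
have ys : dot (x + eps *: w) s = 0.
  apply: H; first by rewrite dotDl dotZl wg mulr0 addr0.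
  rewrite -ball_normE /= opprD addrA subrr add0r normrN normrZ gtr0_norm //.
  rewrite /eps mulrAC ltr_pdivrMr // ltr_pM2l //.
  by rewrite ltrDl.
have ws : dot w s = 0.
  by move: ys; rewrite dotDl xs add0r dotZl => /eqP; rewrite mulf_eq0 gt_eqF //= => /eqP.
have : dot w w = 0 by rewrite {2}/w dotBr dotZr ws wg mulr0 subrr.
by move/dot_eq0/eqP; rewrite subr_eq0 => /eqP.
Qed.

Lemma open_dot_gt b : open [set z : E | 0 < dot z b].
Proof.
have -> : [set z : E | 0 < dot z b] = (fun z => dot z b) @^-1` [set r | 0 < r] by [].
by apply: open_comp; [move=> *; exact: cont_dot | exact: open_gt].
Qed.

Lemma closed_dot_ge b : closed [set z : E | 0 <= dot z b].
Proof.
have -> : [set z : E | 0 <= dot z b] = (fun z => dot z b) @^-1` [set r | 0 <= r] by [].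
by apply: preimage_closed; [move=> *; exact: cont_dot | exact: closed_ge].
Qed.

Lemma comp_sign (S : set E) x0 y b : (forall z, S z -> dot z b != 0) ->
  connected_component S x0 y -> 0 < dot x0 b -> 0 < dot y b.
Proof.
move=> Sb Ay x0b; set A := connected_component S x0.
have Ax0 : A x0.
  by case: Ay => C [Cx0 CS Cc] _; exact: connected_component_refl (CS _ Cx0).
have cA := @component_connected _ S x0.
have eq : A `&` [set z | 0 < dot z b] = A.
apply: cA.
- by exists x0.
- by exists [set z | 0 < dot z b]; [exact: open_dot_gt|].
- exists [set z | 0 <= dot z b]; first exact: closed_dot_ge.
  apply/seteqP; split => z [Az h]; split => //; first exact: ltW.
  rewrite /= lt_neqAle (h : 0 <= dot z b) andbT eq_sym; apply: Sb.
  exact: connected_component_sub Az.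
have : (A `&` [set z | 0 < dot z b]) y by rewrite eq.
by case.
Qed.

Lemma comp_sign_neg (S : set E) x0 y b : (forall z, S z -> dot z b != 0) ->
  connected_component S x0 y -> dot x0 b < 0 -> dot y b < 0.
Proof.
move=> Sb Ay x0b; rewrite -oppr_gt0 -dotNr; apply: (comp_sign _ Ay).
  by move=> z /Sb; rewrite dotNr oppr_eq0.
by rewrite dotNr oppr_gt0.
Qed.

Lemma closure_ge (C : set E) s y : (forall z, C z -> 0 < dot z s) ->
  closure C y -> 0 <= dot y s.
Proof.
move=> H; have cl := closed_dot_ge (b:=s).
have : closure C `<=` closure [set z | 0 <= dot z s].
  by apply: closureS => z /H /ltW.
by move: cl => /closure_id <-; apply.
Qed.

End Geo.

Section Simple.
Variables (R : realType) (n : nat).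
Notation E := 'rV[R]_n.
Implicit Types u v w x y a b : E.

Definition ncomb (S : seq E) (a : E) :=
  exists c : E -> R, (forall x, 0 <= c x) /\ a = \sum_(x <- S) c x *: x.

Lemma sum_ind (S : seq E) a (k : R) : uniq S -> a \in S ->
  \sum_(x <- S) (if x == a then k else 0) *: x = k *: a.
Proof.
move=> uS aS; rewrite (bigD1_seq a) //= eqxx big1 ?addr0 // => x /negbTE ->.
by rewrite scale0r.
Qed.

Lemma ncomb_subst (S : seq E) a b : uniq S -> b \in S ->
  ncomb [seq x <- S | x != b] b -> ncomb S a -> ncomb [seq x <- S | x != b] a.
Proof.
move=> uS bS [d [d0 hb]] [c [c0 ->]].
exists (fun x => c b * d x + c x); split.
  by move=> x; rewrite addr_ge0 // mulr_ge0.
rewrite (bigD1_seq b) //= big_filter.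
rewrite [X in c b *: X]hb !big_filter scaler_sumr -big_split /=; apply: eq_bigr => x _.
by rewrite scalerA scalerDl.
Qed.

Lemma dot_ncomb x0 (S : seq E) (c : E -> R) : (forall x, 0 <= c x) ->
  (forall x, x \in S -> 0 < dot x0 x) ->
  0 <= dot x0 (\sum_(x <- S) c x *: x).
Proof.
move=> c0 Sp; rewrite dot_sumr big_seq; apply: sumr_ge0 => x xS.
by rewrite dotZr mulr_ge0 // ltW // Sp.
Qed.

Lemma key_contra x0 (S : seq E) a1 a2 (k1 k2 : R) :
  uniq S -> (forall x, x \in S -> 0 < dot x0 x) ->
  a1 \in S -> a2 \in S -> a1 != a2 -> 0 < k1 -> 0 < k2 ->
  ~ ncomb [seq x <- S | x != a1] a1 ->
  ~ ncomb S (k1 *: a1 - k2 *: a2).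
Proof.
move=> uS Sp a1S a2S a12 k10 k20 nr [d [d0 hd]].
move: hd; rewrite (bigD1_seq a1) //= -big_filter => hd.
set S1 := [seq x <- S | x != a1] in hd nr.
have a2S1 : a2 \in S1 by rewrite mem_filter eq_sym a12.
have uS1 : uniq S1 by rewrite filter_uniq.
have eq1 : (k1 - d a1) *: a1 = k2 *: a2 + \sum_(x <- S1) d x *: x.
  move/eqP: (hd); rewrite subr_eq => /eqP hd'.
  by rewrite scalerBl hd' (addrC _ (k2 *: a2)) addrA addrAC addrK.
have [lt|ge] := ltP (d a1) k1.
  apply: nr; set m := k1 - d a1.
  have m0 : 0 < m by rewrite subr_gt0.
  exists (fun x => (d x + (if x == a2 then k2 else 0)) / m); split.
    move=> x; apply: divr_ge0; last exact: ltW.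
    by apply: addr_ge0 => //; case: ifP => // _; exact: ltW.
  have -> : \sum_(x <- S1) ((d x + (if x == a2 then k2 else 0)) / m) *: x =
      m^-1 *: (\sum_(x <- S1) d x *: x + \sum_(x <- S1) (if x == a2 then k2 else 0) *: x).
    rewrite -big_split scaler_sumr; apply: eq_bigr => x _.
    by rewrite /= -scalerDl scalerA mulrC.
  rewrite sum_ind // addrC -eq1 scalerA mulVf ?scale1r //.
  by rewrite gt_eqF.
have := congr1 (dot x0) eq1.
rewrite dotZr dotDr dotZr => h.
have l0 : (k1 - d a1) * dot x0 a1 <= 0.
  by rewrite mulr_le0_ge0 ?subr_le0 // ltW // Sp.
have r0 : 0 < k2 * dot x0 a2 + dot x0 (\sum_(x <- S1) d x *: x).
  apply: ltr_pwDl; first by rewrite mulr_gt0 // Sp.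
  apply: dot_ncomb => // x; rewrite mem_filter => /andP[_]; exact: Sp.
by move: l0; rewrite h leNgt r0.
Qed.


Lemma sum_conv (F : E -> E) (S : seq E) :
  \sum_(i < size S) F S`_i = \sum_(x <- S) F x.
Proof. by rewrite (big_nth 0) big_mkord. Qed.

Lemma min_exists (P : seq E) k : forall S, (size S <= k)%N -> uniq S ->
  {subset S <= P} -> (forall a, a \in P -> ncomb S a) ->
  exists S', [/\ uniq S', {subset S' <= P}, (forall a, a \in P -> ncomb S' a)
    & forall b, b \in S' -> ~ ncomb [seq x <- S' | x != b] b].
Proof.
elim: k => [|k IH] S.
  rewrite leqn0 => /nilP -> _ _ sp; exists [::]; split => //.
have [[b [bS hb]]|nob] :=
  pselect (exists b, b \in S /\ ncomb [seq x <- S | x != b] b); last first.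
  move=> _ uS SP sp; exists S; split => // b bS hb; apply: nob; by exists b.
move=> sS uS SP sp; apply: (IH [seq x <- S | x != b]).
- have : (size [seq x <- S | x != b] < size S)%N.
    rewrite size_filter -(count_predC (pred1 b) S).
    have -> : count (fun x => x != b) S = count (predC (pred1 b)) S by [].
    rewrite -[X in (X < _)%N]add0n ltn_add2r.
    by rewrite -has_count has_pred1.
  by move=> h; rewrite -ltnS (leq_trans h sS).
- by rewrite filter_uniq.
- by move=> x; rewrite mem_filter => /andP[_ /SP].
- by move=> a aP; apply: ncomb_subst => //; exact: sp.
Qed.


Lemma refl_self a : a != 0 -> refl a a = - a.
Proof.
move=> a0; have aa : dot a a != 0 by rewrite gt_eqF // dot_gt0.
by rewrite /refl mulfK // scaler_nat mulr2n opprD addrA subrr add0r.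
Qed.

Lemma maxpart (r : R) : Num.max r 0 - Num.max (- r) 0 = r.
Proof.
have [r0|r0] := leP 0 r.
  by rewrite (max_idPr _) ?subr0 // oppr_le0.
by rewrite (max_idPl _) ?sub0r ?opprK // oppr_ge0 ltW.
Qed.

Lemma psum_seq0 (S : seq E) (F : E -> R) : (forall x, x \in S -> 0 <= F x) ->
  \sum_(x <- S) F x = 0 -> forall x, x \in S -> F x = 0.
Proof.
move=> H; rewrite big_seq => /eqP; rewrite psumr_eq0 // => /allP A x xS.
by have /implyP/(_ xS)/eqP := A x xS.
Qed.

Lemma simple_exists (Psi : seq E) x0 : 0 \notin Psi ->
  (forall a b, a \in Psi -> b \in Psi -> refl a b \in Psi) ->
  (forall a, a \in Psi -> dot x0 a != 0) ->
  exists S, simple_system Psi S /\ (forall s, s \in S -> 0 < dot x0 s).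
Proof.
move=> h0 hrefl hreg.
set P := [seq a <- Psi | 0 < dot x0 a].
have [S [uS SP span nr]] : exists S', [/\ uniq S', {subset S' <= P},
    (forall a, a \in P -> ncomb S' a)
    & forall b, b \in S' -> ~ ncomb [seq x <- S' | x != b] b].
  apply: (@min_exists P (size (undup P)) (undup P)) => //.
  - exact: undup_uniq.
  - by move=> x; rewrite mem_undup.
  - move=> a aP; exists (fun x => if x == a then 1 else 0); split.
      by move=> x; case: ifP.
    by rewrite sum_ind ?scale1r ?undup_uniq ?mem_undup.
have Sp : forall s, s \in S -> 0 < dot x0 s.
  by move=> s /SP; rewrite mem_filter => /andP[].
have SPsi : {subset S <= Psi}.
  by move=> s /SP; rewrite mem_filter => /andP[].
have nz : forall a, a \in Psi -> a != 0.
  by move=> a aP; apply/eqP => a0; move: h0; rewrite -a0 aP.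
have neg : forall a, a \in Psi -> - a \in Psi.
  by move=> a aP; rewrite -refl_self ?nz //; exact: hrefl.
have obtuse : forall a b, a \in S -> b \in S -> a != b -> dot a b <= 0.
  move=> a b aS bS ab; rewrite leNgt; apply/negP => ab0.
  have aa : 0 < dot a a by rewrite dot_gt0 // nz // SPsi.
  set c := 2 * dot b a / dot a a.
  have c0 : 0 < c by rewrite divr_gt0 // mulr_gt0 // dotC.
  have rP : refl a b \in Psi by apply: hrefl; exact: SPsi.
  have rE : refl a b = b - c *: a by [].
  have [rpos|rneg] := ltP 0 (dot x0 (refl a b)).
    have : ncomb S (1 *: b - c *: a).
      by rewrite scale1r -rE; apply: span; rewrite mem_filter rpos rP.
    apply: (key_contra (x0 := x0)) => //; first by rewrite eq_sym.
    exact: nr.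
  have rneg' : dot x0 (refl a b) < 0.
    by rewrite lt_neqAle rneg andbT; apply: hreg.
  have : ncomb S (c *: a - 1 *: b).
    rewrite scale1r -opprB -rE; apply: span.
    by rewrite mem_filter neg // dotNr oppr_gt0 rneg'.
  apply: (key_contra (x0 := x0)) => //.
  exact: nr.
exists S; split => //; split => //.
- move=> c hc i iS.
  set c' := fun x : E => c (index x S).
  have hs : \sum_(x <- S) c' x *: x = 0.
    rewrite -(sum_conv (fun x => c' x *: x)) -[RHS]hc; apply: eq_bigr => j _.
    by rewrite /c' index_uniq.
  set f := fun x => Num.max (c' x) 0.
  set g := fun x => Num.max (- c' x) 0.
  have f0 : forall x, 0 <= f x by move=> x; rewrite /f le_max lexx orbT.
  have g0 : forall x, 0 <= g x by move=> x; rewrite /g le_max lexx orbT.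
  have fg : \sum_(x <- S) f x *: x = \sum_(x <- S) g x *: x.
    apply/eqP; rewrite -subr_eq0 -sumrB -[X in _ == X]hs; apply/eqP; apply: eq_bigr => x _.
    by rewrite -scalerBl maxpart.
  set v := \sum_(x <- S) f x *: x.
  have vv : dot v v <= 0.
    rewrite {2}/v fg /v dot_suml big_seq; apply: sumr_le0 => x xS.
    rewrite dotZl dot_sumr mulr_sumr big_seq; apply: sumr_le0 => y yS.
    rewrite dotZr mulrA.
    have [xy|xy] := eqVneq x y.
      rewrite -xy /f /g; have [c0|c0] := leP 0 (c' x).
        by rewrite (max_idPr (_ : - c' x <= 0)) ?mulr0 ?mul0r // oppr_le0.
      by rewrite !mul0r.
    by rewrite mulr_ge0_le0 ?mulr_ge0 // obtuse.
  have v0 : v = 0.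
    by apply: dot_eq0; apply/eqP; rewrite eq_le vv dot_ge0.
  have zf : forall x, x \in S -> f x = 0.
    have : dot x0 v = 0 by rewrite v0 dot0r.
    rewrite /v dot_sumr => hsum x xS.
    have H0 : forall y, y \in S -> 0 <= dot x0 (f y *: y).
      by move=> y yS; rewrite dotZr mulr_ge0 // ltW // Sp.
    have := psum_seq0 H0 hsum xS; rewrite dotZr => /eqP; rewrite mulf_eq0.
    case/orP => [/eqP //|]; by rewrite gt_eqF // Sp.
  have zg : forall x, x \in S -> g x = 0.
    have : dot x0 (\sum_(x <- S) g x *: x) = 0 by rewrite -fg -/v v0 dot0r.
    rewrite dot_sumr => hsum x xS.
    have H0 : forall y, y \in S -> 0 <= dot x0 (g y *: y).
      by move=> y yS; rewrite dotZr mulr_ge0 // ltW // Sp.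
    have := psum_seq0 H0 hsum xS; rewrite dotZr => /eqP; rewrite mulf_eq0.
    case/orP => [/eqP //|]; by rewrite gt_eqF // Sp.
  have xS : S`_i \in S by rewrite mem_nth.
  have := maxpart (c' S`_i); rewrite -/(f _) -/(g _) zf // zg // subr0.
  by rewrite /c' index_uniq.
- move=> a aPsi.
  have [apos|aneg] := ltP 0 (dot x0 a).
    have [d [d0 ->]] : ncomb S a by apply: span; rewrite mem_filter apos aPsi.
    exists (fun i => d S`_i); split; last by left.
    by rewrite (sum_conv (fun x => d x *: x)).
  have aneg' : dot x0 a < 0 by rewrite lt_neqAle aneg andbT; apply: hreg.
  have [d [d0 hd]] : ncomb S (- a).
    by apply: span; rewrite mem_filter neg // dotNr oppr_gt0 aneg'.
  exists (fun i => - d S`_i); split; last by right => i; rewrite oppr_le0.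
  rewrite (sum_conv (fun x => - d x *: x)) -[a]opprK hd -sumrN.
  by apply: eq_bigr => x _; rewrite scaleNr.
Qed.

End Simple.

Section Main.
Variables (R : realType) (n : nat) (Phi Psi : seq 'rV[R]_n).
Notation E := 'rV[R]_n.
Implicit Types u v w x y a b : E.
Hypothesis hPhi : root_system Phi.
Hypothesis hsub : root_subsystem Phi Psi.

Lemma Phi0 : 0 \notin Phi. Proof. by case: hPhi. Qed.
Lemma Phirefl a b : a \in Phi -> b \in Phi -> refl a b \in Phi.
Proof. by case: hPhi => _ H _; apply: H. Qed.
Lemma Phired a (c : R) : a \in Phi -> c *: a \in Phi -> c = 1 \/ c = -1.
Proof. by case: hPhi => _ _ H; apply: H. Qed.
Lemma PsiPhi : {subset Psi <= Phi}. Proof. by case: hsub. Qed.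
Lemma Psirefl a b : a \in Psi -> b \in Psi -> refl a b \in Psi.
Proof. by case: hsub => _ _ H; apply: H. Qed.
Lemma nzPhi a : a \in Phi -> a != 0.
Proof. by move=> aP; apply/eqP => a0; move: Phi0; rewrite -a0 aP. Qed.
Lemma Psi0 : 0 \notin Psi.
Proof. by apply/negP => /PsiPhi; apply/negP; exact: Phi0. Qed.
Lemma negPsi a : a \in Psi -> - a \in Psi.
Proof. by move=> aP; rewrite -refl_self ?nzPhi ?PsiPhi //; exact: Psirefl. Qed.
Lemma regsub z : regular Phi z -> regular Psi z.
Proof. by move=> h a /PsiPhi; apply: h. Qed.

Lemma chamber_reg C z : is_chamber Phi C -> C z -> regular Phi z.
Proof. by case=> x _ ->; apply: connected_component_sub. Qed.

Lemma chamber_ne C : is_chamber Phi C -> exists x, C x.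
Proof. by case=> x rx ->; exists x; exact: connected_component_refl. Qed.

Lemma chamber_sign C b : is_chamber Phi C -> b \in Phi ->
  (forall z, C z -> 0 < dot z b) \/ (forall z, C z -> dot z b < 0).
Proof.
case=> x rx -> bP.
have Sb : forall z, regular Phi z -> dot z b != 0 by move=> z /(_ b bP).
have := rx b bP; rewrite neq_lt => /orP[h|h].
  by right => z Hz; exact: (comp_sign_neg Sb Hz).
by left => z Hz; exact: (comp_sign Sb Hz).
Qed.

Lemma chamber_pos_at C b x : is_chamber Phi C -> b \in Phi -> C x ->
  0 < dot x b -> forall z, C z -> 0 < dot z b.
Proof.
move=> hC bP Cx xb; case: (chamber_sign hC bP) => // H.
by move: (H x Cx); rewrite ltNge ltW.
Qed.

Lemma restr_pos C b : is_chamber Phi C -> b \in Psi ->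
  (forall z, C z -> 0 < dot z b) -> forall z, chamber_restr Psi C z -> 0 < dot z b.
Proof.
move=> hC bP H z [x' Cx' cz].
have Sb : forall w, regular Psi w -> dot w b != 0 by move=> w /(_ b bP).
exact: (comp_sign Sb cz (H x' Cx')).
Qed.

Lemma restr_sub C : is_chamber Phi C -> C `<=` chamber_restr Psi C.
Proof.
move=> hC z Cz; exists z => //; apply: connected_component_refl.
by apply: regsub; exact: chamber_reg Cz.
Qed.

Lemma patch_multiple al be y0 (e : R) : al \in Phi -> be \in Phi ->
  dot y0 al = 0 -> 0 < e ->
  (forall y, dot y al = 0 -> ball y0 e y -> dot y be = 0) -> be = al \/ be = - al.
Proof.
move=> aP bP y0a e0 H.
have := patch_prop (nzPhi aP) y0a e0 H; set t := _ / _ => bt.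
have := @Phired al t aP; rewrite -bt => /(_ bP) [t1|t1].
  by left; rewrite bt t1 scale1r.
by right; rewrite bt t1 scaleN1r.
Qed.


Lemma wall_simple C al : is_chamber Phi C -> al \in Psi ->
  (exists y0, hyper al y0 /\ exists2 e : R, 0 < e &
     forall y, hyper al y -> ball y0 e y -> closure C y) ->
  exists ga, [/\ ga = al \/ ga = - al, simple_roots Psi (chamber_restr Psi C) ga
     & forall z, C z -> 0 < dot z ga].
Proof.
move=> hC aPsi [y0 [hy0 [e e0 patch]]].
have aPhi := PsiPhi aPsi.
have [x Cx] := chamber_ne hC.
have rx := chamber_reg hC Cx.
have [S [[uS SPsi li sp] Spos]] := simple_exists (Psi:=Psi) (x0:=x) Psi0 Psirefl
  (fun a aP => rx a (PsiPhi aP)).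
set ga := if 0 < dot x al then al else - al.
have gaE : ga = al \/ ga = - al by rewrite /ga; case: ifP; [left|right].
have gaPsi : ga \in Psi by case: gaE => ->; [|apply: negPsi].
have xga : 0 < dot x ga.
  rewrite /ga; case: ifP => // h; rewrite dotNr oppr_gt0 lt_neqAle (rx al aPhi) /=.
  by rewrite leNgt h.
have gapos : forall z, C z -> 0 < dot z ga.
  exact: chamber_pos_at hC (PsiPhi gaPsi) Cx xga.
have Spos' : forall s, s \in S -> forall z, C z -> 0 < dot z s.
  by move=> s sS; exact: chamber_pos_at hC (PsiPhi (SPsi s sS)) Cx (Spos s sS).
have [c [hc csign]] := sp ga gaPsi.
have cpos : forall i, 0 <= c i.
  case: csign => // cneg; exfalso.
  have : dot x ga <= 0.
    rewrite hc dot_sumr; apply: sumr_le0 => i _.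
    by rewrite dotZr mulr_le0_ge0 // ltW // Spos // mem_nth.
  by rewrite leNgt xga.
have [i0 ci0] : exists i0 : 'I_(size S), c i0 != 0.
  case: (pselect (exists i0 : 'I_(size S), c i0 != 0)) => // Hn; exfalso.
  have H (i : 'I_(size S)) : c i = 0 by apply/eqP; apply/negPn/negP => hi; apply: Hn; exists i.
  have : ga = 0 by rewrite hc big1 // => i _; rewrite H scale0r.
  by move/eqP; rewrite (negbTE (nzPhi (PsiPhi gaPsi))).
have s0 : S`_i0 \in S by rewrite mem_nth.
have sy : forall y, dot y al = 0 -> ball y0 e y -> dot y S`_i0 = 0.
  move=> y ya yb.
  have cly := patch y ya yb.
  have yga : dot y ga = 0 by case: gaE => ->; rewrite ?dotNr ya ?oppr0.
  have tz : forall i : 'I_(size S), true -> c i * dot y S`_i = 0.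
    apply: psumr_eq0P.
      move=> i _; rewrite mulr_ge0 // (closure_ge _ cly) // => z Cz.
      exact: Spos' (mem_nth 0 (ltn_ord i)) z Cz.
    rewrite -[RHS]yga hc dot_sumr; apply: eq_bigr => i _; by rewrite dotZr.
  by have := tz i0 isT; move/eqP; rewrite mulf_eq0 (negbTE ci0) /= => /eqP.
have s1 := patch_multiple aPhi (PsiPhi (SPsi _ s0)) hy0 e0 sy.
have sE : S`_i0 = ga.
  have sx := Spos _ s0.
  case: gaE s1 xga => -> [] sE' //; rewrite sE' in sx => h; exfalso.
    by rewrite dotNr oppr_gt0 in sx; move: (lt_trans sx h); rewrite ltxx.
  by rewrite dotNr oppr_gt0 in h; move: (lt_trans h sx); rewrite ltxx.
exists ga; split => //.
exists S; split => //.
- move=> b bS; split; first exact: SPsi.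
  exact: restr_pos hC (SPsi _ bS) (Spos' b bS).
- by rewrite -sE.
Qed.

Lemma cross_pos C D al be : is_chamber Phi C -> is_chamber Phi D ->
  connected_through C D al -> al \in Phi -> al \notin Psi -> be \in Psi ->
  (forall z, C z -> 0 < dot z be) -> (forall z, D z -> 0 < dot z be).
Proof.
move=> hC hD [y0 [hy0 [e e0 patch]]] aPhi aPsi bPsi Cpos.
case: (chamber_sign hD (PsiPhi bPsi)) => // Dneg; exfalso.
have sy : forall y, dot y al = 0 -> ball y0 e y -> dot y be = 0.
  move=> y ya yb; have [cC cD] := patch y ya yb.
  have h1 := closure_ge Cpos cC.
  have h2 : 0 <= dot y (- be).
    apply: (closure_ge _ cD) => z Dz; rewrite dotNr oppr_gt0; exact: Dneg.
  by apply/eqP; rewrite eq_le h1 andbT; rewrite dotNr oppr_ge0 in h2.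
case: (patch_multiple aPhi (PsiPhi bPsi) hy0 e0 sy) => bE.
  by move: aPsi; rewrite -bE bPsi.
by move: aPsi; rewrite -[al]opprK -bE negPsi.
Qed.

Lemma cross_iff C D al be : is_chamber Phi C -> is_chamber Phi D ->
  connected_through C D al -> al \in Phi -> al \notin Psi -> be \in Psi ->
  (forall z, C z -> 0 < dot z be) <-> (forall z, D z -> 0 < dot z be).
Proof.
move=> hC hD ct aPhi aPsi bPsi; split => [Cpos|Dpos].
  exact: (cross_pos hC hD ct aPhi aPsi bPsi Cpos).
case: (chamber_sign hC (PsiPhi bPsi)) => // Cneg; exfalso.
have Cneg' : forall w, C w -> 0 < dot w (- be).
  by move=> w Cw; rewrite dotNr oppr_gt0; exact: Cneg.
have [z Dz] := chamber_ne hD.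
have := cross_pos hC hD ct aPhi aPsi (negPsi bPsi) Cneg' Dz.
rewrite dotNr oppr_gt0 => h2.
by move: (lt_trans h2 (Dpos z Dz)); rewrite ltxx.
Qed.

Lemma restr_pos_iff C b : is_chamber Phi C -> b \in Psi ->
  (forall z, chamber_restr Psi C z -> 0 < dot z b) <-> (forall z, C z -> 0 < dot z b).
Proof.
move=> hC bP; split; last exact: restr_pos.
by move=> H z Cz; apply: H; exact: restr_sub.
Qed.

Lemma simple_transfer C D g : is_chamber Phi C -> is_chamber Phi D ->
  (forall b, b \in Psi -> (forall z, C z -> 0 < dot z b) -> forall z, D z -> 0 < dot z b) ->
  simple_roots Psi (chamber_restr Psi C) g -> simple_roots Psi (chamber_restr Psi D) g.
Proof.
move=> hC hD H [S [ss pos gS]]; exists S; split => // b bS.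
have [bP h] := pos b bS; split => //.
apply/(restr_pos_iff hD bP); apply: H => //; exact/(restr_pos_iff hC bP).
Qed.

End Main.

Lemma ss_lemma (R : realType) n (b al ga : 'rV[R]_n) (t : R) (A B : set 'rV[R]_n) :
  b = t *: al -> b != 0 -> (ga = al \/ ga = - al) ->
  (forall z, A z -> 0 < dot z ga) -> (forall z, B z -> 0 < dot z ga) ->
  same_side b A B.
Proof.
move=> hb b0 gaE Ap Bp.
have [t' hb'] : exists t', b = t' *: ga.
  case: gaE => ->; first by exists t.
  by exists (- t); rewrite hb scaleNr scalerN opprK.
have t0 : t' != 0 by apply: contraNneq b0 => t0; rewrite hb' t0 scale0r.
have [tn|tp|te] := ltgtP t' 0; last by rewrite te eqxx in t0.
  rewrite /same_side; right; split => z Hz /=; rewrite hb' dotZr nmulr_rlt0 //.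
    exact: Ap.
  exact: Bp.
rewrite /same_side; left; split => z Hz /=; rewrite hb' dotZr pmulr_rgt0 //.
  exact: Ap.
exact: Bp.
Qed.

Lemma chain (R : realType) n (Phi Psi : seq 'rV[R]_n) (G : gallery R n) :
  root_system Phi -> root_subsystem Phi Psi -> is_gallery Phi G ->
  forall j1 d, (j1 + d <= glen G)%N ->
  (forall j, (j1 < j <= j1 + d)%N -> gwall G j \notin Psi) ->
  forall b, b \in Psi -> (forall z, gch G (j1 + d) z -> 0 < dot z b) ->
  forall z, gch G j1 z -> 0 < dot z b.
Proof.
move=> hPhi hsub [hch hw] j1; elim=> [|d IH] hl hnot b bP.
  by rewrite addn0.
move=> hpos; apply: IH => //; first lia.
  by move=> j hj; apply: hnot; lia.
have [wP ct] : gwall G (j1 + d.+1) \in Phi /\ connected_through (gch G (j1 + d.+1).-1) (gch G (j1 + d.+1)) (gwall G (j1 + d.+1)).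
  by apply: hw; lia.
have e : (j1 + d.+1).-1 = (j1 + d)%N by lia.
rewrite e in ct.
have hC : is_chamber Phi (gch G (j1 + d)) by apply: hch; lia.
have hDc : is_chamber Phi (gch G (j1 + d.+1)) by apply: hch.
have hn : gwall G (j1 + d.+1) \notin Psi by apply: hnot; lia.
exact: (proj2 (cross_iff hPhi hsub hC hDc ct wP hn bP) hpos).
Qed.

Theorem theorem3 (R : realType) (n : nat) (Phi Psi : seq 'rV[R]_n)
    (Gamma Delta : gallery R n) (p : nat -> nat) :
  root_system Phi ->
  root_subsystem Phi Psi ->
  saturated Phi Psi ->
  is_gallery Phi Gamma ->
  is_gallery Phi Delta ->
  gallery_lifts Phi Psi Delta (restr_gallery Psi Gamma) ->
  incr_embedding_onto p (glen (restr_gallery Psi Gamma)) (I_Psi Psi Gamma) ->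
  [/\ p_pair p Delta Gamma, sign_positive p Delta Gamma
    & cosign_positive p Delta Gamma].
Proof.
move=> hPhi hsub hsat hG hD [glenD hwall hlift] [pinc ponto].
set I := I_Psi Psi Gamma in pinc ponto.
rewrite /= in glenD pinc ponto.
set q := fun i => nth 0%N I i.-1.
have Is : sorted ltn I := I_sorted Psi Gamma.
have qinc : incr_on q (size I) := nth_incr Is.
have peq : forall i, (1 <= i <= size I)%N -> p i = q i.
  apply: (incr_unique pinc qinc).
  - move=> i hi; have : p i \in I by apply/ponto; exists i.
    by move/mem_nth_ex => [j [hj e]]; exists j; split => //; rewrite /q e.
  - move=> i hi; have : q i \in I := nth_mem1 hi.
    by move/ponto => [j [hj e]]; exists j; split => //; rewrite e.
have ridx : forall i, (1 <= i)%N -> restr_idx Psi Gamma i = q i by case.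
have qprop : forall i, (1 <= i <= size I)%N ->
    [&& (1 <= q i)%N, (q i <= glen Gamma)%N & gwall Gamma (q i) \in Psi].
  by move=> i hi; rewrite -I_mem; exact: nth_mem1.
have hyp : forall i, (1 <= i <= size I)%N ->
    hyper (gwall Delta i) = hyper (gwall Gamma (q i)).
  by move=> i hi; rewrite hwall ?glenD //= ridx //; case/andP: hi.
have [hchG hwG] := hG.
have [hchD hwD] := hD.
have common : forall i, (1 <= i <= size I)%N ->
  [/\ gwall Delta i = (dot (gwall Delta i) (gwall Gamma (q i)) /
        dot (gwall Gamma (q i)) (gwall Gamma (q i))) *: gwall Gamma (q i),
      gwall Delta i != 0 &
      exists y0, hyper (gwall Gamma (q i)) y0 /\ exists2 e : R, 0 < e &
        forall y, hyper (gwall Gamma (q i)) y -> ball y0 e y ->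
          closure (gch Gamma (q i).-1) y /\ closure (gch Gamma (q i)) y].
  move=> i hi; have /and3P[k1 kl kPsi] := qprop i hi.
  have [aPhiG ct] : gwall Gamma (q i) \in Phi /\ connected_through (gch Gamma (q i).-1)
      (gch Gamma (q i)) (gwall Gamma (q i)) by apply: hwG; rewrite k1.
  have [bPhi _] : gwall Delta i \in Phi /\ connected_through (gch Delta i.-1)
      (gch Delta i) (gwall Delta i) by apply: hwD; rewrite glenD.
  split => //.
  - exact: (hyper_prop (nzPhi hPhi (PsiPhi hsub kPsi)) (hyp i hi)).
  - exact: (nzPhi hPhi bPhi).
split.
- by move=> i; rewrite glenD => hi; rewrite hyp // peq.
- move=> i; rewrite glenD => hi; rewrite peq //.
  have /and3P[k1 kl kPsi] := qprop i hi.
  have [hb b0 [y0 [hy0 [e e0 patch]]]] := common i hi.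
  have patchk : exists y0, hyper (gwall Gamma (q i)) y0 /\ exists2 e : R, 0 < e &
      forall y, hyper (gwall Gamma (q i)) y -> ball y0 e y -> closure (gch Gamma (q i)) y.
    by exists y0; split => //; exists e => // y hy hby; exact: (patch y hy hby).2.
  have [ga [gaE gaS gapos]] := wall_simple hPhi hsub (hchG _ kl) kPsi patchk.
  have gaS' : simple_roots Psi (gch (restr_gallery Psi Gamma) i) ga.
    by rewrite /= ridx //; case/andP: hi.
  have hi' : (i <= glen Delta)%N by rewrite glenD; case/andP: hi.
  have [S [_ Spos gS]] := hlift i hi' ga gaS'.
  have [_ Dpos] := Spos ga gS.
  exact: (ss_lemma hb b0 gaE Dpos gapos).
- move=> i; rewrite glenD => hi; rewrite peq //.
  have /and3P[k1 kl kPsi] := qprop i hi.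
  have [hb b0 [y0 [hy0 [e e0 patch]]]] := common i hi.
  have /andP[hi1 hi2] : (1 <= i)%N && (i <= size I)%N := hi.
  have ip : i.-1.+1 = i := prednK hi1.
  have hk' : (restr_idx Psi Gamma i.-1 = 0%N /\ i = 1%N) \/
             (restr_idx Psi Gamma i.-1 = q i.-1 /\ (1 < i)%N).
    have [i_1|i_gt] : i = 1%N \/ (1 < i)%N by lia.
      by left; rewrite i_1.
    by right; split => //; rewrite ridx //; lia.
  set k' := restr_idx Psi Gamma i.-1 in hk' *.
  have k'lt : (k' < q i)%N.
    case: hk' => [[-> _]|[-> i2]]; first by [].
    apply: qinc => //; lia.
  have nowall : forall j, (k' < j <= (q i).-1)%N -> gwall Gamma j \notin Psi.
    move=> j hj; apply/negP => jPsi.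
    have jI : j \in I by rewrite I_mem jPsi andbT; apply/andP; split; lia.
    have [l [hl ql]] := mem_nth_ex jI.
    change (q l = j) in ql.
    have /andP[hl1 hl2] := hl.
    have lt1 : (l < i)%N by apply: (incr_refl qinc hl hi); rewrite ql; lia.
    case: hk' => [[_ i1]|[hk i2]]; first lia.
    have : (i.-1 < l)%N.
      apply: (incr_refl qinc _ hl); first by apply/andP; split; lia.
      by move: hj; rewrite hk -ql => /andP[].
    lia.
  have patchk : exists y0, hyper (gwall Gamma (q i)) y0 /\ exists2 e : R, 0 < e &
      forall y, hyper (gwall Gamma (q i)) y -> ball y0 e y -> closure (gch Gamma (q i).-1) y.
    by exists y0; split => //; exists e => // y hy hby; exact: (patch y hy hby).1.
  have hC1 : is_chamber Phi (gch Gamma (q i).-1) by apply: hchG; lia.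
  have hC2 : is_chamber Phi (gch Gamma k') by apply: hchG; lia.
  have [ga [gaE gaS gapos]] := wall_simple hPhi hsub hC1 kPsi patchk.
  have gaS2 : simple_roots Psi (chamber_restr Psi (gch Gamma k')) ga.
    apply: (simple_transfer hsub hC1 hC2 _ gaS).
    move=> b bP hpos.
    have ee : (k' + ((q i).-1 - k'))%N = (q i).-1 by lia.
    have hch := chain hPhi hsub hG (j1:=k') (d:=(q i).-1 - k').
    rewrite ee in hch.
    have h1 : ((q i).-1 <= glen Gamma)%N by lia.
    apply: (hch h1 _ b bP hpos).
    by move=> j hj; apply: nowall.
  have hi' : (i.-1 <= glen Delta)%N by rewrite glenD; lia.
  have [S [_ Spos gS]] := hlift i.-1 hi' ga gaS2.
  have [_ Dpos] := Spos ga gS.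
  exact: (ss_lemma hb b0 gaE Dpos gapos).
Qed.
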